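(* Let $a>0$ be the absolute constant such that for every $0<\eta\le1/2$ and every $m\le\exp(a\eta^2 d_k)$ there exist unit vectors $u_1,\dots,u_m\in\mathbb{R}^{d_k}$ with $\langle u_i,u_h\rangle\le\eta$ for all $i\ne h$. Fix dimensions $d,d_k>1$, $\rho\ge2$, let $L=e^\rho$, and let $0<\varepsilon\le\varepsilon_0$ for a sufficiently small absolute constant $\varepsilon_0$. Suppose there is a (possibly randomized) sketching algorithm that, for any input collection of pairs $(K,V)$ with keys $k_i\in\mathbb{R}^{d_k}$, values $v_i\in\mathbb{R}^d$, $\|k_i\|_2,\|v_i\|_2\le1$, produces a sketch $\mathrm{Attn}'(\cdot)$ of size $S$ (in bits) such that for any $q\in\mathbb{R}^{d_k}$ with $\|q\|_2\le\rho$, with constant probability, \[ \|\mathrm{Attn}(q,K,V)-\mathrm{Attn}'(q)\|_2\le\varepsilon. \] Then \[ S=\Omega\!\left(d\cdot\min\{L/\varepsilon,\;L^2,\;\exp(a d_k/\log^2L)\}\right). \]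
   Context: $\mathrm{Attn}(q,K,V)=\dfrac{\sum_i e^{q^Tk_i}v_i}{\sum_i e^{q^Tk_i}}$. A sketch is a data structure computed from $(K,V)$ from which a function $\mathrm{Attn}'(q)$ of queries $q$ can be evaluated. *)

(* Defs.v *)
From HB Require Import structures.
From mathcomp Require Import all_boot all_order all_algebra.
From mathcomp Require Import all_classical all_reals all_analysis.
Set Implicit Arguments. Unset Strict Implicit. Unset Printing Implicit Defensive.
Import Order.TTheory GRing.Theory Num.Theory.
Local Open Scope ring_scope.

Definition dotv {R : realType} {n : nat} (u v : 'rV[R]_n) : R :=
  \sum_(j < n) u 0 j * v 0 j.

Definition norm2 {R : realType} {n : nat} (u : 'rV[R]_n) : R :=
  Num.sqrt (dotv u u).

Definition Attn {R : realType} {dk d n : nat} (q : 'rV[R]_dk)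
  (K : 'I_n -> 'rV[R]_dk) (V : 'I_n -> 'rV[R]_d) : 'rV[R]_d :=
  (\sum_(i < n) expR (dotv q (K i)))^-1 *: \sum_(i < n) expR (dotv q (K i)) *: V i.

Definition packing_constant {R : realType} (a : R) : Prop :=
  forall (dk : nat) (eta : R), (0 < dk)%N -> 0 < eta -> eta <= 1 / 2 ->
  forall m : nat, m%:R <= expR (a * eta ^+ 2 * dk%:R) ->
  exists u : 'I_m -> 'rV[R]_dk,
    (forall i, norm2 (u i) = 1) /\
    (forall i h, i != h -> dotv (u i) (u h) <= eta).

(* A randomized sketching scheme with public randomness omega drawn from the
   probability P, sketch = bit string of at most S bits, which succeeds
   (error <= eps) for every input and every query of norm <= rho with
   probability at least 2/3 (the success event contains a measurable set of
   probability >= 2/3, so no measurability assumption is imposed). *)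
Definition valid_sketch {R : realType} (dm : measure_display) (Omega : measurableType dm)
  (P : probability Omega R) (d dk : nat) (rho eps : R) (S : nat)
  (enc : forall n : nat, Omega -> ('I_n -> 'rV[R]_dk) -> ('I_n -> 'rV[R]_d) -> seq bool)
  (dec : Omega -> seq bool -> 'rV[R]_dk -> 'rV[R]_d) : Prop :=
  (forall n omega K V, (size (enc n omega K V) <= S)%N) /\
  (forall (n : nat) (K : 'I_n -> 'rV[R]_dk) (V : 'I_n -> 'rV[R]_d) (q : 'rV[R]_dk),
     (0 < n)%N ->
     (forall i, norm2 (K i) <= 1) -> (forall i, norm2 (V i) <= 1) ->
     norm2 q <= rho ->
     exists A : set Omega, measurable A /\
       (A `<=` [set omega | norm2 (Attn q K V - dec omega (enc n omega K V) q) <= eps])%classic /\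
       ((2 / 3 : R)%:E <= P A)%E).

(* Main.v *)
Require Import Defs.
From HB Require Import structures.
From mathcomp Require Import all_boot all_order all_algebra.
From mathcomp Require Import all_classical all_reals all_analysis.
From mathcomp Require Import measurable_realfun.
From mathcomp Require Import zify ring lra.
Import Order.TTheory GRing.Theory Num.Theory.
Local Open Scope ring_scope.

Set Implicit Arguments. Unset Strict Implicit. Unset Printing Implicit Defensive.

Section Comb.
Variable R : realType.
Variable I : finType.
Local Notation X := {ffun I -> bool}.

Definition flipf (a : I) (x : X) : X := [ffun i => if i == a then ~~ x i else x i].

Lemma flipfK a : involutive (flipf a).
Proof.
move=> x; apply/ffunP => i; rewrite !ffunE; case: (i == a) => //; exact: negbK.
Qed.

Lemma sum_flip a (F : X -> R) : \sum_x F x = \sum_x F (flipf a x).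
Proof. exact: (reindex_inj (can_inj (flipfK a))). Qed.

Definition sgnb (b : bool) : R := if b then 1 else -1.

Lemma cardX : #|X|%:R = 2 ^+ #|I| :> R.
Proof. by rewrite card_ffun card_bool natrX. Qed.

Lemma sum_sgn2 a b :
  \sum_(x : X) sgnb (x a) * sgnb (x b) = (a == b)%:R * 2 ^+ #|I|.
Proof.
have [->|ab] := eqVneq a b.
  rewrite mul1r (eq_bigr (fun _ => 1)); last by move=> x _; case: (x b); rewrite /sgnb; lra.
  by rewrite sumr_const cardX.
rewrite mul0r.
have H := sum_flip a (fun x => sgnb (x a) * sgnb (x b)).
have E : \sum_x sgnb (flipf a x a) * sgnb (flipf a x b) = - \sum_(x : X) sgnb (x a) * sgnb (x b).
  have ba : b != a by rewrite eq_sym.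
  rewrite -sumrN; apply: eq_bigr => x _; rewrite !ffunE eqxx (negbTE ba).
  by case: (x a); rewrite /sgnb /=; lra.
rewrite /= in H; rewrite E in H; lra.
Qed.

Lemma sum_constX (c : R) : \sum_(x : X) c = c * 2 ^+ #|I|.
Proof. by rewrite sumr_const -cardX mulr_natr. Qed.

Definition agree (g x : X) : nat := #|[pred i | g i == x i]|.

Lemma agree_sumE g x : (agree g x)%:R = \sum_i (nat_of_bool (g i == x i))%:R :> R.
Proof.
rewrite /agree -sum1_card natr_sum big_mkcond /=; apply: eq_bigr => i _.
by rewrite inE; case: (g i == x i).
Qed.

Lemma agree_le g x : (agree g x <= #|I|)%N.
Proof. exact: max_card. Qed.

Lemma sum_agree g : \sum_(x : X) (agree g x)%:R = #|I|%:R * 2 ^+ #|I| / 2 :> R.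
Proof.
have E : forall x, (agree g x)%:R = \sum_i ((g i == x i) : nat)%:R :> R.
  move=> x; rewrite /agree -sum1_card natr_sum big_mkcond /=; apply: eq_bigr => i _.
  by rewrite inE; case: (g i == x i).
rewrite (eq_bigr _ (fun x _ => E x)) exchange_big /=.
have F : forall i, \sum_(x : X) ((g i == x i) : nat)%:R = 2 ^+ #|I| / 2 :> R.
  move=> i; have H := sum_flip i (fun x => ((g i == x i) : nat)%:R).
  have H2 : \sum_(x : X) (((g i == x i) : nat)%:R + ((g i == flipf i x i) : nat)%:R) = 2 ^+ #|I| :> R.
    rewrite (eq_bigr (fun _ => 1)); first by rewrite sumr_const cardX.
    by move=> x _; rewrite ffunE eqxx; case: (g i); case: (x i); rewrite /= ?addr0 ?add0r.
  rewrite big_split /= -H in H2; lra.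
rewrite (eq_bigr _ (fun i _ => F i)) sumr_const.
by rewrite -mulrA mulr_natl.
Qed.

Lemma sum_pow_agree (lam : R) g :
  \sum_(x : X) lam ^+ agree g x = (1 + lam) ^+ #|I|.
Proof.
have E : forall x : X, lam ^+ agree g x = \prod_i (if g i == x i then lam else 1).
  move=> x; rewrite /agree -prodr_const [LHS]big_mkcond /=; apply: eq_bigr => i _.
  by rewrite inE.
rewrite (eq_bigr _ (fun x _ => E x)).
rewrite -(bigA_distr_bigA (fun i b => if g i == b then lam else 1)) /=.
rewrite -prodr_const; apply: eq_bigr => i _.
by rewrite big_bool /=; case: (g i) => /=; rewrite addrC.
Qed.

End Comb.

Unset Implicit Arguments. Set Strict Implicit. Set Printing Implicit Defensive.

Set Implicit Arguments. Unset Strict Implicit. Unset Printing Implicit Defensive.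

Fixpoint code (m : seq bool) : nat := if m is b :: m' then (b + (code m').*2)%N else 1%N.

Lemma code_gt0 m : (0 < code m)%N.
Proof. elim: m => //= b m IH; rewrite -mul2n; lia. Qed.

Lemma code_lt m : (code m < 2 ^ (size m).+1)%N.
Proof.
elim: m => //= b m IH; rewrite -mul2n expnS.
move: IH; move: (2 ^ (size m).+1)%N => t; case: b => /=; lia.
Qed.

Lemma code_inj : injective code.
Proof.
elim=> [|b m IH] [|b' m'] //=.
- have := code_gt0 m'; rewrite -mul2n; case: b' => /=; lia.
- have := code_gt0 m; rewrite -mul2n; case: b => /=; lia.
- rewrite -!mul2n => E.
  have Hb : b = b' by move: E; case: b; case: b' => //=; lia.
  subst b'; congr (_ :: _); apply: IH; move: E; case: b => /=; lia.
Qed.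

Lemma code_ltS S m : (size m <= S)%N -> (code m < 2 ^ S.+1)%N.
Proof.
move=> h; apply: (leq_trans (code_lt m)); apply: leq_pexp2l => //.
Qed.

Lemma bernoulli (R : realFieldType) (x : R) (m : nat) : 0 <= x -> 1 + m%:R * x <= (1 + x) ^+ m.
Proof.
move=> hx; elim: m => [|m IH]; first by rewrite mul0r addr0 expr0.
rewrite exprS -nat1r mulrDl mul1r.
have h1 : 0 <= (1 + x) ^+ m by apply: exprn_ge0; lra.
have h2 : 0 <= m%:R * x by apply: mulr_ge0.
nra.
Qed.

Section Count.
Variable R : realType.
Variable I : finType.
Local Notation X := {ffun I -> bool}.

Lemma count_core (S : nat) (f : X -> seq bool) (g : seq bool -> X) :
  (forall x, size (f x) <= S)%N ->
  5/8 * #|I|%:R * 2 ^+ #|I| <= \sum_x (agree (g (f x)) x)%:R :> R ->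
  (#|I| <= 576 * S)%N.
Proof.
move=> hS hsum.
have [n hn] : {n | #|I| = n} by exists #|I|.
rewrite hn in hsum *.
have [n0|npos] := posnP n; first by rewrite n0.
have p2 : 0 < 2 ^+ n :> R by apply: exprn_gt0.
have nR : 0 < n%:R :> R by rewrite ltr0n.
have S1 : (1 <= S)%N.
  case: S hS => // hS.
  have E : forall x, f x = [::] by move=> x; have := hS x; case: (f x).
  move: hsum; rewrite (eq_bigr (fun x => (agree (g [::]) x)%:R)); last by move=> x _; rewrite E.
  rewrite sum_agree hn => h.
  have : 5 / 8 * (n%:R * 2 ^+ n) <= 1/2 * (n%:R * 2 ^+ n) :> R by lra.
  have : 0 < n%:R * 2 ^+ n :> R by apply: mulr_gt0.
  lra.
pose good (x : X) := (3 * n <= 5 * agree (g (f x)) x)%N.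
pose G : R := \sum_x (good x : nat)%:R.
have HG : 2 ^+ n / 40 <= G.
  have pw : forall x : X, (agree (g (f x)) x)%:R <= (good x : nat)%:R * n%:R + 3/5 * n%:R :> R.
    move=> x; have h1 := agree_le (g (f x)) x; rewrite hn in h1.
    have h1' : (agree (g (f x)) x)%:R <= n%:R :> R by rewrite ler_nat.
    case: (boolP (good x)) => hg /=.
      rewrite mul1r; lra.
    rewrite mul0r add0r.
    have h3 : (5 * agree (g (f x)) x <= 3 * n)%N by move: hg; rewrite /good; lia.
    have : (5 * agree (g (f x)) x)%:R <= (3 * n)%:R :> R by rewrite ler_nat.
    rewrite !natrM; lra.
  have : \sum_x (agree (g (f x)) x)%:R <= \sum_(x : X) ((good x : nat)%:R * n%:R + 3 / 5 * n%:R) :> R.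
    by apply: ler_sum => x _; exact: pw.
  rewrite big_split sum_constX -mulr_suml hn /=.
  move=> h.
  have h' : 5 / 8 * n%:R * 2 ^+ n <= G * n%:R + 3 / 5 * n%:R * 2 ^+ n by apply: le_trans h.
  have : (2 ^+ n / 40) * n%:R <= G * n%:R by lra.
  by rewrite ler_pM2r.
pose mu : R := 11/10.
pose lam := mu ^+ 5.
have mu1 : 1 <= mu by rewrite /mu; lra.
have lam0 : 0 <= lam by rewrite /lam exprn_ge0 //; lra.
have Hw : G * mu ^+ (3 * n) <= \sum_x lam ^+ agree (g (f x)) x.
  rewrite /G mulr_suml; apply: ler_sum => x _.
  case: (boolP (good x)) => hg /=; last by rewrite mul0r exprn_ge0.
  by rewrite mul1r /lam -exprM; apply: ler_weXn2l.
have Hp : \sum_x lam ^+ agree (g (f x)) x <= 2 ^+ S.+1 * (1 + lam) ^+ n.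
  pose p := fun x => (Ordinal (code_ltS (hS x)) : 'I_(2 ^ S.+1)).
  rewrite (partition_big p predT) //=.
  apply: (le_trans (y := \sum_(k : 'I_(2 ^ S.+1)) (1 + lam) ^+ n)).
    apply: ler_sum => k _.
    case: (pickP (fun x => p x == k)) => [x0 /eqP hx0 | none].
      apply: (le_trans (y := \sum_(x : X) lam ^+ agree (g (f x0)) x)); last by rewrite sum_pow_agree hn.
      rewrite [X in _ <= X](bigID (fun x => p x == k)) /=.
      have -> : \sum_(x | p x == k) lam ^+ agree (g (f x)) x =
                \sum_(x | p x == k) lam ^+ agree (g (f x0)) x.
        apply: eq_bigr => x /eqP hx.
        have : code (f x) = code (f x0) by have := congr1 val hx; rewrite -hx0.
        by move/code_inj => ->.
      by rewrite lerDl sumr_ge0 // => x _; rewrite exprn_ge0.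
    by rewrite big_pred0 // exprn_ge0 // addr_ge0.
  by rewrite sumr_const card_ord -natrX mulr_natl.
have num1 : 65/64 * (1 + lam) <= 2 * mu ^+ 3 by rewrite /lam /mu !exprS expr0; lra.
have key : (65/64) ^+ n <= 2 ^+ (S + 7) :> R.
  have A : 2 ^+ n * mu ^+ (3 * n) <= 40 * (2 ^+ S.+1 * (1 + lam) ^+ n).
    have h0 : 0 <= mu ^+ (3 * n) by rewrite exprn_ge0 //; lra.
    have : 2 ^+ n / 40 * mu ^+ (3 * n) <= G * mu ^+ (3 * n) by rewrite ler_wpM2r.
    lra.
  rewrite exprM -exprMn in A.
  have B : (65/64 * (1 + lam)) ^+ n <= (2 * mu ^+ 3) ^+ n.
    by apply: lerXn2r => //; rewrite nnegrE; [lra | apply: mulr_ge0; [lra | rewrite exprn_ge0 //; lra]].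
  rewrite exprMn in B.
  have C : 0 < (1 + lam) ^+ n by apply: exprn_gt0; lra.
  have D : (65/64) ^+ n <= 40 * 2 ^+ S.+1 :> R.
    have BA : (65 / 64) ^+ n * (1 + lam) ^+ n <= 40 * 2 ^+ S.+1 * (1 + lam) ^+ n.
      by rewrite -mulrA; exact: (le_trans B A).
    by rewrite (ler_pM2r C) in BA.
  apply: (le_trans D); rewrite (addnC S) exprD.
  have : 0 < 2 ^+ S :> R by apply: exprn_gt0.
  rewrite !exprS expr0; lra.
have bern : 2 <= (65/64) ^+ 64 :> R.
  have : 1 + 64%:R * (1/64) <= (1 + 1/64) ^+ 64 :> R by apply: bernoulli; lra.
  have -> : (1 + 1/64 : R) = 65/64 by lra.
  have -> : 64%:R * (1 / 64) = 1 :> R by rewrite mul1r divff.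
  lra.
have kk : (n %/ 64 <= S + 7)%N.
  rewrite -(ler_eXn2l (x := 2 : R)); last by lra.
  apply: (le_trans _ key).
  apply: (le_trans (y := ((65/64) ^+ 64) ^+ (n %/ 64))).
    by apply: lerXn2r => //; rewrite nnegrE //; lra.
  rewrite -exprM; apply: ler_weXn2l; first by lra.
  by rewrite mulnC leq_trunc_div.
have := divn_eq n 64; have := ltn_pmod n (isT : (0 < 64)%N).
lia.
Qed.

End Count.

Unset Implicit Arguments. Set Strict Implicit. Set Printing Implicit Defensive.

Set Implicit Arguments. Unset Strict Implicit. Unset Printing Implicit Defensive.

Lemma exists_good_omega (R : realType) (dm : measure_display) (Omega : measurableType dm)
  (P : probability Omega R) (J : finType) (A : J -> set Omega) :
  (0 < #|J|)%N ->
  (forall j, measurable (A j)) -> (forall j, ((2/3 : R)%:E <= P (A j))%E) ->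
  exists w, 33/50 * #|J|%:R <= \sum_j \1_(A j) w :> R.
Proof.
move=> J0 mA PA.
case: (pselect (exists w, 33/50 * #|J|%:R <= \sum_j \1_(A j) w :> R)) => // H.
exfalso.
have H' : forall w, \sum_j \1_(A j) w <= 33/50 * #|J|%:R :> R.
  move=> w; case: (lerP (\sum_j \1_(A j) w) (33/50 * #|J|%:R)) => // h.
  by exfalso; apply: H; exists w; apply: ltW.
have mf : forall j, measurable_fun setT (fun x : Omega => (\1_(A j) x : R)%:E).
  move=> j; apply/measurable_EFinP; exact: measurable_indic.
have E1 : (\int[P]_(x in setT) (\sum_(j <- index_enum J) (\1_(A j) x)%:E) =
          \sum_(j <- index_enum J) P (A j))%E.
  rewrite ge0_integral_sum //.
  - by apply: eq_bigr => j _; rewrite integral_indic // setIT.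
have E2 : (\int[P]_(x in setT) (\sum_(j <- index_enum J) (\1_(A j) x)%:E) <=
          \int[P]_(x in setT) (cst ((33/50 * #|J|%:R)%:E) x))%E.
  apply: ge0_le_integral => //.
  - by move=> x _; apply: sume_ge0 => j _; rewrite lee_fin indicE.
  - by apply: emeasurable_sum => j; exact: mf.
  - by move=> x _; rewrite /= sumEFin lee_fin; exact: H'.
rewrite integral_cst // in E2.
have h1 := probability_setT P.
have E2' : (\int[P]_(x in setT) (\sum_(j <- index_enum J) (\1_(A j) x)%:E) <= (33/50 * #|J|%:R)%:E)%E.
  by apply: (le_trans E2); rewrite le_eqVlt; apply/orP; left; apply/eqP; rewrite -[RHS]mule1; congr (_ * _)%E.
rewrite E1 in E2'. clear E2.
have E3 : ((\sum_(j <- index_enum J) ((2/3 : R)%:E)) <= \sum_(j <- index_enum J) P (A j))%E.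
  by apply: lee_sum => j _; exact: PA.
have := le_trans E3 E2'.
have sc : \sum_(j : J) (2/3 : R) = 2/3 * #|J|%:R by rewrite sumr_const mulr_natr.
rewrite sumEFin lee_fin sc.
have : 0 < #|J|%:R :> R by rewrite ltr0n.
lra.
Qed.

Unset Implicit Arguments. Set Strict Implicit. Set Printing Implicit Defensive.

Set Implicit Arguments. Unset Strict Implicit. Unset Printing Implicit Defensive.

Section Vec.
Variable R : realType.

Lemma dotvZl n (r : R) (u v : 'rV[R]_n) : dotv (r *: u) v = r * dotv u v.
Proof. rewrite /dotv mulr_sumr; apply: eq_bigr => k _; by rewrite mxE mulrA. Qed.

Lemma dotvC n (u v : 'rV[R]_n) : dotv u v = dotv v u.
Proof. rewrite /dotv; apply: eq_bigr => k _; by rewrite mulrC. Qed.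

Lemma dotv_ge0 n (u : 'rV[R]_n) : 0 <= dotv u u.
Proof. by rewrite /dotv sumr_ge0 // => k _; rewrite -expr2 sqr_ge0. Qed.

Lemma norm2_dotv n (u : 'rV[R]_n) : norm2 u ^+ 2 = dotv u u.
Proof. by rewrite /norm2 sqr_sqrtr // dotv_ge0. Qed.

Lemma norm2_1 n (u : 'rV[R]_n) : norm2 u = 1 -> dotv u u = 1.
Proof. by move=> h; rewrite -norm2_dotv h expr1n. Qed.

Lemma dotv1_norm2 n (u : 'rV[R]_n) : dotv u u = 1 -> norm2 u = 1.
Proof. by move=> h; rewrite /norm2 h sqrtr1. Qed.

Lemma norm2Z n (r : R) (u : 'rV[R]_n) : 0 <= r -> norm2 u = 1 -> norm2 (r *: u) = r.
Proof.
move=> r0 h; rewrite /norm2 dotvZl dotvC dotvZl norm2_1 // mulr1 -expr2.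
by rewrite sqrtr_sqr ger0_norm.
Qed.

Lemma coord_cheb n (E : 'rV[R]_n) (eps th : R) : norm2 E <= eps -> 0 <= th ->
  (\sum_k (nat_of_bool (th <= `|E 0 k|))%:R) * th ^+ 2 <= eps ^+ 2.
Proof.
move=> hE th0.
have n0 : 0 <= norm2 E by rewrite /norm2 sqrtr_ge0.
apply: (le_trans (y := dotv E E)); last first.
  by rewrite -norm2_dotv; apply: lerXn2r => //; rewrite nnegrE //; apply: (le_trans n0).
rewrite mulr_suml /dotv; apply: ler_sum => k _.
case: (boolP (th <= `|E 0 k|)) => h /=; last by rewrite mul0r -expr2 sqr_ge0.
rewrite mul1r -expr2 -[E 0 k ^+ 2]real_normK ?num_real //; apply: lerXn2r; rewrite ?nnegrE //.
Qed.

Lemma expR1_le4 : expR (1 : R) <= 4.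
Proof.
have h1 := expR_ge1Dx (- (1/2) : R).
have h2 : expR (1/2 : R) * expR (- (1/2)) = 1 by rewrite -expRD subrr expR0.
have h3 : expR (1 : R) = expR (1/2) * expR (1/2) by rewrite -expRD; congr expR; lra.
have p := expR_gt0 (1/2 : R).
have h4 : expR (1/2 : R) <= 2.
  have : expR (1/2 : R) * (1/2) <= expR (1/2) * expR (- (1/2)) by rewrite ler_pM2l //; lra.
  rewrite h2; lra.
rewrite h3; nra.
Qed.

End Vec.

Unset Implicit Arguments. Set Strict Implicit. Set Printing Implicit Defensive.

Set Implicit Arguments. Unset Strict Implicit. Unset Printing Implicit Defensive.

Section Core.
Variables (R : realType) (N d dk : nat) (rho eps : R) (u : 'I_N -> 'rV[R]_dk).
Hypotheses (hN : (0 < N)%N) (hd : (0 < d)%N) (hrho : 2 <= rho) (heps : 0 < eps)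
  (heps0 : eps <= 1/1000) (hu1 : forall i, norm2 (u i) = 1)
  (hu2 : forall i h, i != h -> dotv (u i) (u h) <= 1/rho)
  (hNL1 : N.-1%:R <= 1/10000 * expR rho / eps)
  (hNL2 : N.-1%:R <= 1/10000 * expR rho ^+ 2).

Local Notation I := ('I_N * 'I_d)%type.
Local Notation X := {ffun I -> bool}.

Definition sd : R := Num.sqrt d%:R.
Definition Vx (x : X) : 'I_N -> 'rV[R]_d := fun i => \row_c (sgnb R (x (i, c)) / sd).
Definition qv j : 'rV[R]_dk := rho *: u j.
Definition w j i := expR (dotv (qv j) (u i)).
Definition Zs j := \sum_i w j i.
Definition Bv (x : X) j c := \sum_(i | i != j) w j i * (sgnb R (x (i, c)) / sd).

Lemma sd_gt0 : 0 < sd.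
Proof. by rewrite /sd sqrtr_gt0 ltr0n. Qed.

Lemma sd2 : sd ^+ 2 = d%:R.
Proof. by rewrite /sd sqr_sqrtr // ler0n. Qed.

Lemma sgnb2 b : sgnb R b ^+ 2 = 1.
Proof. by case: b; rewrite /sgnb /= ?expr1n // sqrrN expr1n. Qed.

Lemma Vx_norm x i : norm2 (Vx x i) = 1.
Proof.
apply: dotv1_norm2; rewrite /dotv (eq_bigr (fun _ => d%:R^-1)).
  rewrite sumr_const card_ord.
  have -> : d%:R^-1 *+ d = d%:R^-1 * d%:R :> R by rewrite mulr_natr.
  by rewrite mulVf // pnatr_eq0 -lt0n.
move=> c _; rewrite !mxE -expr2 expr_div_n sgnb2 sd2 div1r //.
Qed.

Lemma rho_gt0 : 0 < rho.
Proof. by apply: lt_le_trans hrho. Qed.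

Lemma qv_norm j : norm2 (qv j) = rho.
Proof. by apply: norm2Z => //; have := rho_gt0; lra. Qed.

Lemma dot_q j i : dotv (qv j) (u i) = rho * dotv (u j) (u i).
Proof. exact: dotvZl. Qed.

Lemma w_jj j : w j j = expR rho.
Proof. by rewrite /w dot_q norm2_1 // mulr1. Qed.

Lemma w_gt0 j i : 0 < w j i.
Proof. exact: expR_gt0. Qed.

Lemma w_le j i : i != j -> w j i <= 4.
Proof.
move=> ij; apply: le_trans (expR1_le4 R); rewrite /w ler_expR dot_q.
have h : dotv (u j) (u i) <= 1/rho by apply: hu2; rewrite eq_sym.
have r0 := rho_gt0.
have : rho * dotv (u j) (u i) <= rho * (1 / rho) by rewrite ler_pM2l.
by rewrite mul1r divff ?gt_eqF.
Qed.

Lemma sum_offdiag_const (j : 'I_N) (k : R) : \sum_(i | i != j) k = k * N.-1%:R.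
Proof.
have E : \sum_(i < N) k = k + \sum_(i | i != j) k by rewrite (bigD1 j).
have E2 : \sum_(i < N) k = k * N%:R by rewrite sumr_const card_ord mulr_natr.
have E3 : N%:R = 1 + N.-1%:R :> R by rewrite -{1}(prednK hN) -add1n natrD.
rewrite E3 mulrDr mulr1 E in E2.
by apply: (addrI k).
Qed.

Lemma sum_offdiag_le j : \sum_(i | i != j) w j i <= 4 * N.-1%:R.
Proof.
apply: (le_trans (y := \sum_(i | i != j) (4 : R))).
  by apply: ler_sum => i; exact: w_le.
have E : \sum_(i < N) (4 : R) = 4 + \sum_(i | i != j) 4 by rewrite (bigD1 j).
have E2 : \sum_(i < N) (4 : R) = 4 * N%:R by rewrite sumr_const card_ord mulr_natr.
have E3 : N%:R = 1 + N.-1%:R :> R by rewrite -{1}(prednK hN) -add1n natrD.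
rewrite E3 in E2; rewrite E2 in E.
have -> : \sum_(i | i != j) (4 : R) = 4 * N.-1%:R.
  by rewrite mulrDr mulr1 in E; apply: (addrI 4); rewrite -E.
by [].
Qed.

Lemma Zs_split j : Zs j = expR rho + \sum_(i | i != j) w j i.
Proof. by rewrite /Zs (bigD1 j) //= w_jj. Qed.

Lemma Zs_ge j : expR rho <= Zs j.
Proof. by rewrite Zs_split lerDl sumr_ge0 // => i _; apply: ltW; exact: w_gt0. Qed.

Lemma Zs_gt0 j : 0 < Zs j.
Proof. exact: lt_le_trans (expR_gt0 rho) (Zs_ge j). Qed.

Lemma Zs_le j : Zs j <= expR rho + 4 * N.-1%:R.
Proof. by rewrite Zs_split lerD2l sum_offdiag_le. Qed.

Lemma attn_coord x j c :
  Zs j * (Attn (qv j) u (Vx x)) 0 c = expR rho * (sgnb R (x (j, c)) / sd) + Bv x j c.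
Proof.
rewrite /Attn mxE summxE mulrA mulfV ?gt_eqF ?Zs_gt0 // mul1r.
rewrite (bigD1 j) //= !mxE -/(w j j) w_jj; congr (_ + _).
by apply: eq_bigr => i _; rewrite !mxE.
Qed.
Lemma Bv_sq j c : \sum_(x : X) (Bv x j c) ^+ 2 = 2 ^+ #|{: I}| * (\sum_(i | i != j) w j i ^+ 2) / d%:R.
Proof.
have e1 : forall x, Bv x j c = (\sum_(i | i != j) w j i * sgnb R (x (i, c))) / sd.
  by move=> x; rewrite /Bv mulr_suml; apply: eq_bigr => i _; rewrite mulrA.
rewrite (eq_bigr _ (fun x _ => congr1 (fun t => t ^+ 2) (e1 x))).
rewrite (eq_bigr _ (fun x _ => expr_div_n _ _ _)) sd2 -mulr_suml; congr (_ / _).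
have e2 : forall x : X, (\sum_(i | i != j) w j i * sgnb R (x (i, c))) ^+ 2 =
   \sum_(i | i != j) \sum_(k | k != j) (w j i * w j k) * (sgnb R (x (i, c)) * sgnb R (x (k, c))).
  move=> x; rewrite expr2 mulr_suml; apply: eq_bigr => i _; rewrite mulr_sumr.
  by apply: eq_bigr => k _; ring.
rewrite (eq_bigr _ (fun x _ => e2 x)) exchange_big /= mulr_sumr; apply: eq_bigr => i ij.
rewrite exchange_big /=.
rewrite (eq_bigr (fun k => (w j i * w j k) * (((i, c) == (k, c)) %:R * 2 ^+ #|{: I}|))); last first.
  by move=> k _; rewrite -mulr_sumr sum_sgn2.
rewrite (bigD1 i) //= eqxx mul1r big1 ?addr0; first by rewrite -expr2 mulrC.
move=> k /andP [_ ki].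
have : ((i, c) == (k, c)) = false by rewrite xpair_eqE eqxx andbT eq_sym (negbTE ki).
by move=> ->; rewrite mul0r mulr0.
Qed.

Definition tau := expR rho / (2 * sd).

Lemma Bv_bad j c : \sum_(x : X) (nat_of_bool (tau <= `|Bv x j c|))%:R <= 2 ^+ #|{: I}| * (64/10000) :> R.
Proof.
have L0 := expR_gt0 rho; have s0 := sd_gt0.
have t0 : 0 < tau by rewrite /tau divr_gt0 // mulr_gt0.
have h1 : (\sum_(x : X) (nat_of_bool (tau <= `|Bv x j c|))%:R) * tau ^+ 2 <= \sum_(x : X) (Bv x j c) ^+ 2.
  rewrite mulr_suml; apply: ler_sum => x _.
  case: (boolP (tau <= `|Bv x j c|)) => h /=; last by rewrite mul0r sqr_ge0.
  rewrite mul1r -[Bv x j c ^+ 2]real_normK ?num_real //; apply: lerXn2r; rewrite ?nnegrE //; exact: ltW.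
rewrite Bv_sq in h1.
have h2 : \sum_(i | i != j) w j i ^+ 2 <= 16 * N.-1%:R.
  rewrite -(sum_offdiag_const j); apply: ler_sum => i ij.
  have := w_le ij; have := w_gt0 j i; move=> a b.
  have -> : (16 : R) = 4 ^+ 2 by rewrite expr2; lra.
  apply: lerXn2r; rewrite ?nnegrE //; try lra; exact: ltW.
have d0 : 0 < d%:R :> R by rewrite ltr0n.
have p2 : 0 < 2 ^+ #|{: I}| :> R by apply: exprn_gt0.
have h3 : 2 ^+ #|{: I}| * (\sum_(i | i != j) w j i ^+ 2) / d%:R <= 2 ^+ #|{: I}| * (16 * N.-1%:R) / d%:R.
  by rewrite ler_pM2r ?invr_gt0 // ler_pM2l.
have ht : tau ^+ 2 = expR rho ^+ 2 / (4 * d%:R).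
  by rewrite /tau expr_div_n exprMn sd2; congr (_ / (_ * _)); rewrite expr2; lra.
have hN2 := hNL2.
set S := \sum_(x : X) _ in h1 *.
set L := expR rho in ht hN2 L0 *.
set P := 2 ^+ #|{: I}| in h3 p2 *.
set m := N.-1%:R in h3 hN2 *.
have := le_trans h1 h3; rewrite ht => h4.
have L2 : 0 < L ^+ 2 by apply: exprn_gt0.
have h5 : S * L ^+ 2 <= 64 * P * m.
  have e : S * (L ^+ 2 / (4 * d%:R)) * (4 * d%:R) = S * L ^+ 2 by field; apply/eqP; lra.
  have e2 : P * (16 * m) / d%:R * (4 * d%:R) = 64 * P * m by field; apply/eqP; lra.
  rewrite -e -e2; rewrite ler_pM2r //; lra.
have h6 : 64 * P * m <= P * (64 / 10000) * L ^+ 2.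
  have : 0 <= P by lra.
  nra.
have : S * L ^+ 2 <= P * (64 / 10000) * L ^+ 2 by apply: le_trans h6.
by rewrite ler_pM2r.
Qed.

Definition theta j := expR rho / (2 * sd * Zs j).

Lemma decode x j c (yv : 'rV[R]_d) :
  `|Bv x j c| < tau ->
  `|(Attn (qv j) u (Vx x) - yv) 0 c| < theta j ->
  ((0 < yv 0 c) == x (j, c)).
Proof.
move=> hB hE.
have hA := attn_coord x j c.
have L0 := expR_gt0 rho; have s0 := sd_gt0; have Z0 := Zs_gt0 j.
have eE : (Attn (qv j) u (Vx x) - yv) 0 c = Attn (qv j) u (Vx x) 0 c - yv 0 c by rewrite !mxE.
rewrite eE /theta in hE.
set att := Attn (qv j) u (Vx x) 0 c in hA hE.
set yc := yv 0 c in hE *.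
set Z := Zs j in hA Z0 hE.
set L := expR rho in hA L0 hB hE.
set B := Bv x j c in hA hB.
have hZE : `|Z * att - Z * yc| < L / sd / 2.
  rewrite -mulrBr normrM gtr0_norm //.
  have e : Z * (L / (2 * sd * Z)) = L / sd / 2 by field; apply/andP; split; apply/eqP; lra.
  by rewrite -e ltr_pM2l.
have hB' : `|B| < L / sd / 2.
  by move: hB; rewrite /tau -/L; have -> : L / (2 * sd) = L / sd / 2 by field; apply/eqP; lra.
have P0 : 0 < L / sd by apply: divr_gt0.
move: hZE hB'; rewrite !ltr_norml => /andP [a1 a2] /andP [b1 b2].
set P := L / sd in P0 a1 a2 b1 b2.
have hA' : Z * att = L * (sgnb R (x (j, c)) / sd) + B by rewrite hA.
case: (x (j, c)) hA' => /= hA'.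
  have e : L * (1 / sd) = P by rewrite mul1r.
  rewrite e in hA'.
  have : 0 < Z * yc by lra.
  by rewrite pmulr_rgt0 // => ->.
have e : L * (-1 / sd) = - P by rewrite /P mulNr mul1r mulrN.
rewrite e in hA'.
have : Z * yc < 0 by lra.
rewrite pmulr_rlt0 // => h.
by rewrite ltNge (ltW h).
Qed.

Lemma Ebad_count x j (yv : 'rV[R]_d) :
  norm2 (Attn (qv j) u (Vx x) - yv) <= eps ->
  \sum_c (nat_of_bool (theta j <= `|(Attn (qv j) u (Vx x) - yv) 0 c|))%:R
    <= 4 * (14/10000) ^+ 2 * d%:R :> R.
Proof.
move=> hn.
have L0 := expR_gt0 rho; have s0 := sd_gt0; have Z0 := Zs_gt0 j.
have th0 : 0 < theta j by rewrite /theta divr_gt0 // !mulr_gt0.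
have := coord_cheb hn (ltW th0).
set S := \sum_c _.
have hZ := Zs_le j.
have hN1 := hNL1; have he := heps; have he0 := heps0.
rewrite /theta; set L := expR rho in L0 hZ hN1 *; set Z := Zs j in Z0 hZ *.
set m := N.-1%:R in hZ hN1.
have sd2' := sd2.
have d0 : 0 < d%:R :> R by rewrite ltr0n.
have h1 : eps * Z <= 14/10000 * L.
  have : m * eps <= 1/10000 * L.
    have e : 1 / 10000 * L / eps * eps = 1/10000 * L by field; apply/eqP; lra.
    by rewrite -e ler_pM2r.
  have : eps * Z <= eps * (L + 4 * m) by rewrite ler_pM2l.
  have : eps * L <= 1/1000 * L by rewrite ler_pM2r.
  lra.
have h2 : eps ^+ 2 <= (14/10000 * L / Z) ^+ 2.
  apply: lerXn2r; rewrite ?nnegrE; try lra.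
    by apply: divr_ge0; lra.
  by rewrite ler_pdivlMr.
have e : (L / (2 * sd * Z)) ^+ 2 * (4 * (14/10000) ^+ 2 * d%:R) = (14/10000 * L / Z) ^+ 2.
  rewrite !expr_div_n !exprMn sd2'; field; apply/andP; split; apply/eqP; lra.
rewrite -e in h2 => h3.
have := le_trans h3 h2.
rewrite [X in _ <= X]mulrC ler_pM2r //.
by apply: exprn_gt0; rewrite divr_gt0 // !mulr_gt0.
Qed.

End Core.

Unset Implicit Arguments. Set Strict Implicit. Set Printing Implicit Defensive.

Set Implicit Arguments. Unset Strict Implicit. Unset Printing Implicit Defensive.

Section Core2.
Variables (R : realType) (N d dk : nat) (rho eps : R) (u : 'I_N -> 'rV[R]_dk).
Hypotheses (hN : (0 < N)%N) (hd : (0 < d)%N) (hrho : 2 <= rho) (heps : 0 < eps)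
  (heps0 : eps <= 1/1000) (hu1 : forall i, norm2 (u i) = 1)
  (hu2 : forall i h, i != h -> dotv (u i) (u h) <= 1/rho)
  (hNL1 : N.-1%:R <= 1/10000 * expR rho / eps)
  (hNL2 : N.-1%:R <= 1/10000 * expR rho ^+ 2).

Local Notation I := ('I_N * 'I_d)%type.
Local Notation X := {ffun I -> bool}.
Local Notation Vx := (Vx R).
Local Notation qv := (qv rho u).

Lemma core_agree (y : X -> 'I_N -> 'rV[R]_d) (A : X -> 'I_N -> bool) :
  (forall x j, A x j -> norm2 (Attn (qv j) u (Vx x) - y x j) <= eps) ->
  33/50 * (2 ^+ #|{: I}| * N%:R) <= \sum_(x : X) \sum_j (nat_of_bool (A x j))%:R :> R ->
  5/8 * #|{: I}|%:R * 2 ^+ #|{: I}| <=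
    \sum_(x : X) \sum_j \sum_c (nat_of_bool ((0 < y x j 0 c) == x (j, c)))%:R :> R.
Proof.
move=> hA hcount.
pose Bb (x : X) (j : 'I_N) (c : 'I_d) : R := (nat_of_bool (tau d rho <= `|Bv rho u x j c|))%:R.
pose Eb (x : X) (j : 'I_N) (c : 'I_d) : R := (nat_of_bool (theta d rho u j <= `|(Attn (qv j) u (Vx x) - y x j) 0 c|))%:R.
pose Ai (x : X) (j : 'I_N) : R := (nat_of_bool (A x j))%:R.
pose kap : R := 4 * (14/10000) ^+ 2.
have pw : forall x j c, Ai x j - Bb x j c - Ai x j * Eb x j c <=
     (nat_of_bool ((0 < y x j 0 c) == x (j, c)))%:R.
  move=> x j c; rewrite /Ai /Bb /Eb.
  have c0 : 0 <= (nat_of_bool ((0 < y x j 0 c) == x (j, c)))%:R :> R := ler0n _ _.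
  case: (boolP (A x j)) => hAj; case: (boolP (tau d rho <= `|Bv rho u x j c|)) => hb;
    case: (boolP (theta d rho u j <= `|(Attn (qv j) u (Vx x) - y x j) 0 c|)) => he; rewrite /=; try lra.
  rewrite -ltNge in hb; rewrite -ltNge in he.
  by rewrite (@decode R N d dk rho u hd hu1 x j c (y x j) hb he) /=; lra.
have T2 : \sum_(x : X) \sum_j \sum_c Bb x j c <= (2 ^+ #|{: I}| * (64/10000)) *+ d *+ N.
  rewrite exchange_big /=.
  rewrite (eq_bigr (fun j => \sum_c \sum_(x : X) Bb x j c)); last by move=> j _; rewrite exchange_big.
  apply: (le_trans (y := \sum_(j < N) \sum_(c < d) (2 ^+ #|{: I}| * (64/10000)))).
    apply: ler_sum => j _; apply: ler_sum => c _; rewrite /Bb.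
    by apply: Bv_bad => //.
  by rewrite !sumr_const !card_ord.
have T3 : \sum_(x : X) \sum_j \sum_c Ai x j * Eb x j c <= kap * d%:R * \sum_(x : X) \sum_j Ai x j.
  rewrite mulr_sumr; apply: ler_sum => x _; rewrite mulr_sumr; apply: ler_sum => j _.
  rewrite -mulr_sumr /Ai; case: (boolP (A x j)) => hAj /=.
    rewrite mul1r mulr1 /Eb /kap.
    by apply: (@Ebad_count R N d dk rho eps u) => //; exact: hA.
  by rewrite !mul0r mulr0.
have T1 : \sum_(x : X) \sum_j \sum_(c < d) Ai x j = d%:R * \sum_(x : X) \sum_j Ai x j.
  rewrite mulr_sumr; apply: eq_bigr => x _; rewrite mulr_sumr; apply: eq_bigr => j _.
  by rewrite sumr_const card_ord mulr_natl.
have LB : \sum_(x : X) \sum_j \sum_c (Ai x j - Bb x j c - Ai x j * Eb x j c) <=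
    \sum_(x : X) \sum_j \sum_c (nat_of_bool ((0 < y x j 0 c) == x (j, c)))%:R.
  by apply: ler_sum => x _; apply: ler_sum => j _; apply: ler_sum => c _; exact: pw.
have EQ : \sum_(x : X) \sum_j \sum_c (Ai x j - Bb x j c - Ai x j * Eb x j c) =
    \sum_(x : X) \sum_j \sum_(c < d) Ai x j - \sum_(x : X) \sum_j \sum_c Bb x j c
    - \sum_(x : X) \sum_j \sum_c Ai x j * Eb x j c.
  rewrite -!sumrB; apply: eq_bigr => x _; rewrite -!sumrB; apply: eq_bigr => j _.
  by rewrite -!sumrB.
rewrite EQ T1 in LB.
have cardI : #|{: I}| = (N * d)%N by rewrite card_prod !card_ord.
rewrite cardI in hcount T2 *.
set P := 2 ^+ (N * d) in hcount T2 *.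
set SA := \sum_(x : X) \sum_j Ai x j in hcount LB T3.
have P0 : 0 < P by apply: exprn_gt0.
have e2 : (P * (64 / 10000)) *+ d *+ N = N%:R * d%:R * P * (64/10000).
  by rewrite -mulrnA (esym (mulr_natr _ (d * N)%N)) natrM; ring.
rewrite e2 in T2.
have D0 : 0 < d%:R :> R by rewrite ltr0n.
have N0 : 0 < N%:R :> R by rewrite ltr0n.
have h1 : d%:R * (33 / 50 * (P * N%:R)) <= d%:R * SA by rewrite ler_pM2l.
rewrite natrM.
have : 0 < N%:R * d%:R * P by rewrite !mulr_gt0.
rewrite /kap in T3.
lra.
Qed.

End Core2.

Unset Implicit Arguments. Set Strict Implicit. Set Printing Implicit Defensive.

Lemma maxn_cases (t : nat) : (maxn 1 t = t /\ (1 <= t)%N) \/ (maxn 1 t = 1%N /\ t = 0%N).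
Proof. lia. Qed.

Lemma maxn_pred (t : nat) : ((maxn 1 t).-1 <= t)%N.
Proof. lia. Qed.

Lemma half_le (R : realType) (x n t : R) : 1 <= n -> t <= n -> x < t + 1 -> x / 2 <= n.
Proof. move=> *; lra. Qed.

Lemma inv_le_half (R : realType) (r : R) : 2 <= r -> 1 / r <= 1 / 2.
Proof.
move=> h; have r0 : 0 < r by lra.
by rewrite ler_pdivrMr // mulrC mulrA ler_pdivlMr //; lra.
Qed.

Lemma final_arith (R : realType) (M D N S : R) : 0 < D ->
  1 / 10000 * M / 2 * D <= N * D -> N * D <= 576 * S -> 1 / 10000 / 1152 * D * M <= S.
Proof. move=> *; nra. Qed.

Theorem theorem10 (R : realType) (a : R) (ha : 0 < a) (hpack : packing_constant a) :
  exists eps0 : R, 0 < eps0 /\ exists C : R, 0 < C /\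
  forall (d dk : nat) (rho eps : R), (1 < d)%N -> (1 < dk)%N -> 2 <= rho ->
  0 < eps -> eps <= eps0 ->
  forall (dm : measure_display) (Omega : measurableType dm) (P : probability Omega R)
    (S : nat)
    (enc : forall n : nat, Omega -> ('I_n -> 'rV[R]_dk) -> ('I_n -> 'rV[R]_d) -> seq bool)
    (dec : Omega -> seq bool -> 'rV[R]_dk -> 'rV[R]_d),
  valid_sketch P rho eps S enc dec ->
  let L := expR rho in
  C * d%:R * Num.min (L / eps) (Num.min (L ^+ 2) (expR (a * dk%:R / (ln L) ^+ 2)))
    <= S%:R.
Proof.
exists (1/1000); split; first lra.
exists (1/10000/1152); split; first lra.
move=> d dk rho eps hd hdk hrho heps heps0 dm Omega P S enc dec [hsize hval] /=.
set L := expR rho.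
have rho0 : 0 < rho by lra.
have lnL : ln L = rho by rewrite /L expRK.
have L0 : 0 < L by apply: expR_gt0.
rewrite lnL.
set E := expR (a * dk%:R / rho ^+ 2).
set M := Num.min (L / eps) (Num.min (L ^+ 2) E).
have E1 : 1 <= E.
  rewrite /E leNgt expR_lt1 -leNgt; apply: divr_ge0; last by apply: exprn_ge0; lra.
  by apply: mulr_ge0; [lra | apply: ler0n].
have ML1 : M <= L / eps by rewrite /M ge_min lexx.
have ML2 : M <= L ^+ 2 by rewrite /M ge_min [X in _ || X]ge_min lexx orbT.
have ME : M <= E by rewrite /M ge_min [X in _ || X]ge_min lexx !orbT.
have M0 : 0 <= M.
  rewrite /M !le_min; apply/and3P; split; last by lra.
    by apply: divr_ge0; lra.
  by apply: exprn_ge0; lra.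
set c : R := 1/10000.
have c0 : 0 < c by rewrite /c; lra.
have c1 : c <= 1 by rewrite /c; lra.
pose t := Num.trunc (c * M).
pose N := maxn 1 t.
have cM0 : 0 <= c * M by apply: mulr_ge0 => //; apply: ltW.
have tM : t%:R <= c * M by rewrite truncn_le.
have tM2 : c * M < t.+1%:R by apply: truncnS_gt.
have hN : (0 < N)%N by rewrite /N leq_max.
have Nt : (N.-1 <= t)%N by apply: maxn_pred.
have NM1 : N.-1%:R <= c * M by apply: le_trans tM; rewrite ler_nat.
have hNL1 : N.-1%:R <= 1/10000 * expR rho / eps.
  by apply: (le_trans NM1); rewrite -/L -/c -mulrA ler_pM2l.
have hNL2 : N.-1%:R <= 1/10000 * expR rho ^+ 2.
  by apply: (le_trans NM1); rewrite -/L -/c ler_pM2l.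
have hNE : N%:R <= E.
  rewrite /N; case: (maxn_cases t) => [[-> _] | [-> _]].
    apply: (le_trans tM); apply: (le_trans _ ME).
    by apply: ler_piMl.
  by [].
have NcM : c * M / 2 <= N%:R.
  have hN1 : 1 <= N%:R :> R by rewrite ler1n.
  have htN : t%:R <= N%:R :> R by rewrite ler_nat /N leq_maxr.
  rewrite -natr1 in tM2.
  exact: (@half_le R _ _ _ hN1 htN tM2).
have hd0 : (0 < d)%N by apply: ltnW.
have hdk0 : (0 < dk)%N by apply: ltnW.
have r12 : 1 / rho <= 1 / 2 by apply: inv_le_half.
have r0' : 0 < 1 / rho by apply: divr_gt0.
have hpk : N%:R <= expR (a * (1 / rho) ^+ 2 * dk%:R).
  by rewrite expr_div_n expr1n div1r mulrAC.
have [u [hu1 hu2]] := hpack dk (1 / rho) hdk0 r0' r12 N hpk.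
have hv : forall p : {ffun 'I_N * 'I_d -> bool} * 'I_N, exists A : set Omega, measurable A /\
   (A `<=` [set w | norm2 (Attn (qv rho u p.2) u (Vx R p.1) -
        dec w (enc N w u (Vx R p.1)) (qv rho u p.2)) <= eps])%classic /\ ((2/3 : R)%:E <= P A)%E.
  move=> [x j]; apply: hval => //.
  - by move=> i; rewrite hu1.
  - by move=> i; rewrite Vx_norm.
  - by rewrite qv_norm.
have [Af hAf] := choice hv.
have J0 : (0 < #|{: {ffun 'I_N * 'I_d -> bool} * 'I_N}|)%N.
  by rewrite card_prod card_ffun card_bool card_ord muln_gt0 expn_gt0 hN.
have [w hw] := exists_good_omega (A := Af) J0 (fun p => (hAf p).1) (fun p => (hAf p).2.2).
pose A (x : {ffun 'I_N * 'I_d -> bool}) (j : 'I_N) := w \in Af (x, j).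
pose y (x : {ffun 'I_N * 'I_d -> bool}) (j : 'I_N) := dec w (enc N w u (Vx R x)) (qv rho u j).
have hA : forall x j, A x j -> norm2 (Attn (qv rho u j) u (Vx R x) - y x j) <= eps.
  by move=> x j; rewrite /A in_setE => h; exact: ((hAf (x, j)).2.1 w h).
have hcnt : 33/50 * (2 ^+ #|{: 'I_N * 'I_d}| * N%:R) <= \sum_(x : {ffun 'I_N * 'I_d -> bool}) \sum_j (nat_of_bool (A x j))%:R :> R.
  have e1 : #|{: {ffun 'I_N * 'I_d -> bool} * 'I_N}|%:R = 2 ^+ #|{: 'I_N * 'I_d}| * N%:R :> R.
    by rewrite card_prod card_ffun card_bool card_ord natrM natrX.
  have e2 : \sum_(p : {ffun 'I_N * 'I_d -> bool} * 'I_N) \1_(Af p) w =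
      \sum_(x : {ffun 'I_N * 'I_d -> bool}) \sum_j (nat_of_bool (A x j))%:R :> R.
    by rewrite pair_big; apply: eq_bigr => [[x j]] _; rewrite indicE.
  by rewrite -e1 -e2.
have hc := @core_agree R N d dk rho eps u hN hd0 hrho heps heps0 hu1 hu2 hNL1 hNL2 y A hA hcnt.
pose f (x : {ffun 'I_N * 'I_d -> bool}) := enc N w u (Vx R x).
pose g (m : seq bool) : {ffun 'I_N * 'I_d -> bool} := [ffun p => 0 < dec w m (qv rho u p.1) 0 p.2].
have hsz : forall x, (size (f x) <= S)%N by move=> x; apply: hsize.
have hsum : 5/8 * #|{: 'I_N * 'I_d}|%:R * 2 ^+ #|{: 'I_N * 'I_d}| <=
    \sum_(x : {ffun 'I_N * 'I_d -> bool}) (agree (g (f x)) x)%:R :> R.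
  apply: (le_trans hc); rewrite le_eqVlt; apply/orP; left; apply/eqP.
  apply: eq_bigr => x _; rewrite agree_sumE pair_big; apply: eq_bigr => [[j k]] _.
  by rewrite /g ffunE.
have hcc := @count_core R ('I_N * 'I_d)%type S f g hsz hsum.
rewrite card_prod !card_ord in hcc.
have hNd : N%:R * d%:R <= 576 * S%:R :> R by rewrite -natrM -natrM ler_nat.
have D0 : 0 < d%:R :> R by rewrite ltr0n.
have h2 : c * M / 2 * d%:R <= N%:R * d%:R by rewrite ler_pM2r.
rewrite /c in h2.
exact: (@final_arith R _ _ _ _ D0 h2 hNd).
Qed.
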